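(* Let $d\ge 1$ and $q\ge 1$ be integers, let $\mathbf{g}_0\in\mathbb{R}^d$ (the server's gradient at iteration $t$, computed on the clean root dataset), and let $\nabla F(\mathbf{w}^t)\in\mathbb{R}^d$ be the gradient of the expected risk at the current model $\mathbf{w}^t$. Let $\bar{\mathbf{g}}_1,\dots,\bar{\mathbf{g}}_N\in\mathbb{R}^d$ be the vectors submitted by the $N$ clients, where any number of them may be adversarial (arbitrary), subject only to $\|\bar{\mathbf{g}}_i\|\le\|\mathbf{g}_0\|$ for every $i$. Let $\eta_1,\dots,\eta_N\ge 0$ be aggregation weights with $\sum_{i=1}^N\eta_i=1$, and let $\bar{\mathbf{g}}^t=\sum_{i=1}^N\eta_i\bar{\mathbf{g}}_i$. Then $$\|\bar{\mathbf{g}}^t-\nabla F(\mathbf{w}^t)\|\le 3\|\mathbf{g}_0-\nabla F(\mathbf{w}^t)\|+2\|\nabla F(\mathbf{w}^t)\|+\frac{\sqrt{d}}{q}.$$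
   Context: All norms are Euclidean. In the underlying federated learning protocol, honest client $i$ with local gradient $\mathbf{g}_i$ submits $\bar{\mathbf{g}}_i=Q\!\left(\frac{\|\mathbf{g}_0\|}{\|\mathbf{g}_i\|}\mathbf{g}_i\right)$, where $Q$ is applied coordinatewise with $Q(x)=\lfloor qx\rfloor/q$ for $x\ge0$ and $Q(x)=(\lfloor qx\rfloor+1)/q$ for $x<0$; the server verifies $\|\bar{\mathbf{g}}_i\|\le\|\mathbf{g}_0\|$ for all clients, so adversarial clients may submit any vector satisfying this bound. The weights are $\eta_i=TS_i/\sum_j TS_j$ with trust scores $TS_i=\max\bigl(0,\langle\bar{\mathbf{g}}_i,\mathbf{g}_0\rangle/\|\mathbf{g}_0\|^2\bigr)$ (assumed not all zero), hence nonnegative and summing to one. *)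

(* Defs.v *)
From HB Require Import structures.
From mathcomp Require Import all_boot all_order all_algebra.
Set Implicit Arguments. Unset Strict Implicit. Unset Printing Implicit Defensive.
Import Order.TTheory GRing.Theory Num.Theory.
Local Open Scope ring_scope.

Definition enorm (R : rcfType) (d : nat) (v : 'rV[R]_d) : R :=
  Num.sqrt (\sum_(i < d) v 0 i ^+ 2).

(* Main.v *)
Require Import Defs.
From HB Require Import structures.
From mathcomp Require Import all_boot all_order all_algebra.
From mathcomp Require Import ring lra.
Import Order.TTheory GRing.Theory Num.Theory.
Local Open Scope ring_scope.

Section H.
Variables (R : rcfType) (d : nat).
Implicit Types u v : 'rV[R]_d.

Lemma enorm_ge0 u : 0 <= enorm u.
Proof. exact: sqrtr_ge0. Qed.

Lemma sumsq_ge0 u : 0 <= \sum_(i < d) u 0 i ^+ 2.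
Proof. by apply: sumr_ge0 => i _; exact: sqr_ge0. Qed.

Lemma enorm_sq u : enorm u ^+ 2 = \sum_(i < d) u 0 i ^+ 2.
Proof. by rewrite /enorm sqr_sqrtr // sumsq_ge0. Qed.

Lemma enorm0_entries u : enorm u = 0 -> forall i, u 0 i = 0.
Proof.
move=> h i.
have hs : \sum_(i < d) u 0 i ^+ 2 = 0 by rewrite -enorm_sq h expr0n.
have := psumr_eq0P (fun j _ => sqr_ge0 (u 0 j)) hs.
by move=> /(_ i isT)/eqP; rewrite sqrf_eq0 => /eqP.
Qed.

Lemma cs u v : \sum_(i < d) u 0 i * v 0 i <= enorm u * enorm v.
Proof.
set A := enorm u; set B := enorm v.
have [A0|Apos] := eqVneq A 0.
  rewrite A0 mul0r big1 // => i _; by rewrite (enorm0_entries _ A0) mul0r.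
have [B0|Bpos] := eqVneq B 0.
  rewrite B0 mulr0 big1 // => i _; by rewrite (enorm0_entries _ B0) mulr0.
have hA : 0 < A by rewrite lt_def Apos enorm_ge0.
have hB : 0 < B by rewrite lt_def Bpos enorm_ge0.
have key : \sum_(i < d) (2%:R * (u 0 i * v 0 i) * (A * B))
   <= \sum_(i < d) (u 0 i ^+ 2 * B ^+ 2 + v 0 i ^+ 2 * A ^+ 2).
  apply: ler_sum => i _.
  have := sqr_ge0 (u 0 i * B - v 0 i * A). lra.
rewrite -mulr_suml big_split /= -!mulr_suml -!enorm_sq -/A -/B in key.
rewrite -mulr_sumr in key.
set S := \sum_(i < d) u 0 i * v 0 i in key *.
have hAB : 0 < A * B by exact: mulr_gt0.
have : 2%:R * S * (A * B) <= 2%:R * (A * B) * (A * B).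
  by apply: le_trans key _; rewrite le_eqVlt; apply/orP; left; apply/eqP; ring.
rewrite ler_pM2r // => h; lra.
Qed.

Lemma enormD u v : enorm (u + v) <= enorm u + enorm v.
Proof.
have h0 : 0 <= enorm u + enorm v by rewrite addr_ge0 // enorm_ge0.
rewrite -(ger0_norm h0) -sqrtr_sqr /enorm ler_sqrt ?sqr_ge0 //.
rewrite -[X in _ <= X ^+ 2]/(enorm u + enorm v) sqrrD !enorm_sq.
have -> : \sum_(i < d) (u + v) 0 i ^+ 2 =
   \sum_(i < d) u 0 i ^+ 2 + \sum_(i < d) v 0 i ^+ 2 + 2%:R * \sum_(i < d) u 0 i * v 0 i.
  rewrite mulr_sumr -!big_split /=; apply: eq_bigr => i _; rewrite !mxE; ring.
have := cs u v; lra.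
Qed.

Lemma enormZ (c : R) u : enorm (c *: u) = `|c| * enorm u.
Proof.
rewrite /enorm.
have -> : \sum_(i < d) (c *: u) 0 i ^+ 2 = c ^+ 2 * \sum_(i < d) u 0 i ^+ 2.
  rewrite mulr_sumr; apply: eq_bigr => i _; rewrite !mxE; ring.
by rewrite sqrtrM ?sqr_ge0 // sqrtr_sqr.
Qed.

Lemma enormN u : enorm (- u) = enorm u.
Proof. by rewrite -scaleN1r enormZ normrN normr1 mul1r. Qed.

Lemma enorm0 : enorm (0 : 'rV[R]_d) = 0.
Proof. by rewrite -(scale0r 0) enormZ normr0 mul0r. Qed.

Lemma enorm_sum (N : nat) (f : 'I_N -> 'rV[R]_d) :
  enorm (\sum_(i < N) f i) <= \sum_(i < N) enorm (f i).
Proof.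
apply: (big_ind2 (fun a b => enorm a <= b)); first by rewrite enorm0.
  by move=> a b c e h1 h2; apply: le_trans (enormD a c) _; exact: lerD.
by [].
Qed.
End H.
Arguments enorm_ge0 {R d}. Arguments enormD {R d}. Arguments enormZ {R d}.
Arguments enormN {R d}. Arguments enorm_sum {R d N}.

Theorem mainTheorem1 (R : rcfType) (d q N : nat) (hd : (1 <= d)%N) (hq : (1 <= q)%N)
  (g0 gradF : 'rV[R]_d) (gbar : 'I_N -> 'rV[R]_d) (eta : 'I_N -> R)
  (hnorm : forall i, enorm (gbar i) <= enorm g0)
  (heta0 : forall i, 0 <= eta i)
  (heta1 : \sum_(i < N) eta i = 1) :
  enorm (\sum_(i < N) eta i *: gbar i - gradF)
    <= 3%:R * enorm (g0 - gradF) + 2%:R * enorm gradF + Num.sqrt (d%:R) / q%:R.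
Proof.
have h1 : enorm (\sum_(i < N) eta i *: gbar i) <= enorm g0.
  apply: le_trans (enorm_sum _) _.
  have -> : enorm g0 = \sum_(i < N) eta i * enorm g0 by rewrite -mulr_suml heta1 mul1r.
  apply: ler_sum => i _; rewrite enormZ ger0_norm //.
  exact: ler_wpM2l.
have h2 := enormD (\sum_(i < N) eta i *: gbar i) (- gradF).
rewrite enormN in h2.
have h3 : enorm g0 <= enorm (g0 - gradF) + enorm gradF.
  by have := enormD (g0 - gradF) gradF; rewrite subrK.
have h4 : 0 <= Num.sqrt (d%:R : R) / q%:R by rewrite divr_ge0 ?sqrtr_ge0.
have h5 := enorm_ge0 (g0 - gradF).
have h6 := enorm_ge0 gradF.
lra.
Qed.
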